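(* Let $g\colon(0,1)\to\mathbb{R}$ be a continuous, strictly increasing function such that $g(1-a)=-g(a)$ for all $a\in(0,1)$ and $\lim_{a\to0^+}g(a)=-\infty$, and let $J(a,b)=g^{-1}\bigl(g(a)-g(b)\bigr)$ for $(a,b)\in S=(0,1)\times(0,1)$. Suppose $J$ is differentiable on $S$. Then for any $0<c<1$, the level curve $\{(a,b)\in S : J(a,b)=c\}$ is the graph of the unique solution $b=b(a)$, $0<a<1$, of the differential equation \[ \frac{db}{da}=\frac{g'(a)}{g'(b)} \] that passes through the point $(c,\tfrac12)$. *)

(* Defs.v *)
From Stdlib Require Import Reals.
From Coquelicot Require Import Coquelicot.
Open Scope R_scope.

Definition in01 (x : R) : Prop := 0 < x < 1.

Definition ode_solution (g b : R -> R) (c : R) : Prop :=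
  (forall a, in01 a -> in01 (b a) /\ is_derive b a (Derive g a / Derive g (b a)))
  /\ b c = 1/2.

(* Main.v *)
Require Import Defs.
From Stdlib Require Import Reals Lra.
From Coquelicot Require Import Coquelicot.
Open Scope R_scope.

Lemma loc01 x : in01 x -> locally x in01.
Proof.
  intros Hx. apply (open_and (fun u => 0 < u) (fun u => u < 1)).
  - apply open_gt. - apply open_lt. - exact Hx.
Qed.

Lemma ginj (g : R -> R) (g_incr : forall x y, in01 x -> in01 y -> x < y -> g x < g y)
  x y : in01 x -> in01 y -> g x = g y -> x = y.
Proof.
  intros Hx Hy E. destruct (Rtotal_order x y) as [H|[H|H]]; auto.
  - specialize (g_incr _ _ Hx Hy H); lra.
  - specialize (g_incr _ _ Hy Hx H); lra.
Qed.

Lemma partial (J : R -> R -> R)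
  (J_diff : forall a b, in01 a -> in01 b -> differentiable_pt J a b) x z :
  in01 x -> in01 z -> exists l : R, is_derive (fun t => J t z) x l.
Proof.
  intros Hx Hz. destruct (J_diff x z Hx Hz) as [lx [ly H]].
  exists (lx * 1 + ly * 0). apply is_derive_Reals.
  apply (derivable_pt_lim_comp_2d J (fun t => t) (fun _ => z)).
  - exact H.
  - apply derivable_pt_lim_id.
  - apply derivable_pt_lim_const.
Qed.

Lemma keyL (g : R -> R) (J : R -> R -> R)
  (g_diff : forall x, in01 x -> ex_derive g x)
  (J_def : forall a b, in01 a -> in01 b -> in01 (J a b) /\ g (J a b) = g a - g b)
  x z l : in01 x -> in01 z -> is_derive (fun t => J t z) x l ->
  Derive g (J x z) * l = Derive g x.
Proof.
  intros Hx Hz Hd.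
  assert (H1 : is_derive (fun t => g (J t z)) x (scal l (Derive g (J x z)))).
  { apply (is_derive_comp g (fun t => J t z)); auto. apply Derive_correct, g_diff, J_def; auto. }
  assert (H2 : is_derive (fun t => g t - g z) x (Derive g x)).
  { apply is_derive_Reals. replace (Derive g x) with (Derive g x - 0) by ring.
    apply (derivable_pt_lim_minus g (fun _ => g z)).
    - apply is_derive_Reals, Derive_correct, g_diff; auto.
    - apply derivable_pt_lim_const. }
  assert (H4 : is_derive (fun t => g (J t z)) x (Derive g x)).
  { apply (is_derive_ext_loc (fun t => g t - g z)); auto.
    generalize (loc01 x Hx). apply filter_imp. intros t Ht. symmetry. apply J_def; auto. }
  apply is_derive_unique in H1. apply is_derive_unique in H4.
  rewrite H1 in H4. rewrite <- H4. unfold scal; simpl; unfold mult; simpl. ring.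
Qed.

Lemma gnz (g : R -> R) (J : R -> R -> R)
  (g_cont : forall x, in01 x -> continuity_pt g x)
  (g_incr : forall x y, in01 x -> in01 y -> x < y -> g x < g y)
  (g_diff : forall x, in01 x -> ex_derive g x)
  (J_def : forall a b, in01 a -> in01 b -> in01 (J a b) /\ g (J a b) = g a - g b)
  (J_diff : forall a b, in01 a -> in01 b -> differentiable_pt J a b) y :
  in01 y -> Derive g y <> 0.
Proof.
  intros Hy E.
  assert (Z : forall x, in01 x -> Derive g x = 0).
  { intros x Hx. set (z := J x y).
    assert (Hz : in01 z) by (apply J_def; auto).
    assert (Ez : J x z = y).
    { apply (ginj g g_incr); auto. apply J_def; auto.
      destruct (J_def x z Hx Hz) as [_ ->]. unfold z.
      destruct (J_def x y Hx Hy) as [_ ->]. ring. }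
    destruct (partial J J_diff x z Hx Hz) as [l Hl].
    rewrite <- (keyL g J g_diff J_def x z l Hx Hz Hl), Ez, E. ring. }
  destruct (MVT_gen g (1/4) (1/2) (fun _ => 0)) as [c [Hc Ec]].
  - intros x Hx. rewrite Rmin_left in Hx by lra. rewrite Rmax_right in Hx by lra.
    assert (Hx' : in01 x) by (unfold in01; lra).
    rewrite <- (Z x Hx'). apply Derive_correct, g_diff; auto.
  - intros x Hx. rewrite Rmin_left in Hx by lra. rewrite Rmax_right in Hx by lra.
    apply g_cont. unfold in01; lra.
  - assert (H := g_incr (1/4) (1/2)). unfold in01 in H. specialize (H ltac:(lra) ltac:(lra) ltac:(lra)). lra.
Qed.

Theorem proposition5p9 (g : R -> R) (J : R -> R -> R)
  (g_cont : forall x, in01 x -> continuity_pt g x)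
  (g_incr : forall x y, in01 x -> in01 y -> x < y -> g x < g y)
  (g_sym : forall a, in01 a -> g (1 - a) = - g a)
  (g_lim : filterlim g (at_right 0) (Rbar_locally m_infty))
  (g_diff : forall x, in01 x -> ex_derive g x)
  (J_def : forall a b, in01 a -> in01 b -> in01 (J a b) /\ g (J a b) = g a - g b)
  (J_diff : forall a b, in01 a -> in01 b -> differentiable_pt J a b) :
  forall c, in01 c ->
    exists b : R -> R,
      ode_solution g b c
      /\ (forall b' : R -> R, ode_solution g b' c -> forall a, in01 a -> b' a = b a)
      /\ (forall a y, in01 a -> in01 y -> (J a y = c <-> y = b a)).
Proof.
  intros c Hc.
  assert (Hh : in01 (1/2)) by (unfold in01; lra).
  assert (g12 : g (1/2) = 0).
  { assert (H := g_sym (1/2) Hh). replace (1 - 1/2) with (1/2) in H by field. lra. }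
  assert (NZ := gnz g J g_cont g_incr g_diff J_def J_diff).
  assert (inj := ginj g g_incr).
  exists (fun a => J a c).
  assert (ODE : ode_solution g (fun a => J a c) c).
  { split.
    - intros a Ha. split. apply J_def; auto.
      destruct (partial J J_diff a c Ha Hc) as [l Hl].
      assert (K := keyL g J g_diff J_def a c l Ha Hc Hl).
      replace (Derive g a / Derive g (J a c)) with l; auto.
      rewrite <- K. field. apply NZ, J_def; auto.
    - apply inj; auto. apply J_def; auto. rewrite g12.
      destruct (J_def c c Hc Hc) as [_ ->]. ring. }
  split; [exact ODE|split].
  - intros b' [Hb' Eb'] a Ha.
    set (h := fun t => g (b' t) - g t).
    assert (Dh : forall t, in01 t -> is_derive h t 0).
    { intros t Ht. destruct (Hb' t Ht) as [Hbt Dbt]. unfold h.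
      apply is_derive_Reals. replace 0 with
        (Derive g (b' t) * (Derive g t / Derive g (b' t)) - Derive g t)
        by (field; apply NZ; auto).
      apply (derivable_pt_lim_minus (fun t => g (b' t)) g).
      - apply is_derive_Reals.
        assert (H := is_derive_comp g b' t _ _ (Derive_correct g _ (g_diff _ Hbt)) Dbt).
        replace (Derive g (b' t) * (Derive g t / Derive g (b' t))) with
          (scal (Derive g t / Derive g (b' t)) (Derive g (b' t))); [exact H|].
        unfold scal; simpl; unfold mult; simpl. ring.
      - apply is_derive_Reals, Derive_correct, g_diff; auto. }
    assert (Eh : h a = h c).
    { destruct (MVT_gen h c a (fun _ => 0)) as [d [Hd Ed]].
      - intros x Hx. apply Dh. unfold in01 in *.
        destruct Hx as [H1 H2].
        assert (Rmin c a > 0) by (apply Rmin_glb_lt; lra).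
        assert (Rmax c a < 1) by (apply Rmax_lub_lt; lra). lra.
      - intros x Hx. assert (Hx' : in01 x).
        { unfold in01 in *. destruct Hx as [H1 H2].
          assert (Rmin c a > 0) by (apply Rmin_glb_lt; lra).
          assert (Rmax c a < 1) by (apply Rmax_lub_lt; lra). lra. }
        apply continuity_pt_filterlim. apply (ex_derive_continuous h).
        exists 0. apply Dh; auto.
      - lra. }
    unfold h in Eh. rewrite Eb', g12 in Eh.
    destruct (Hb' a Ha) as [Hba _].
    apply inj; auto. apply J_def; auto.
    destruct (J_def a c Ha Hc) as [_ ->]. lra.
  - intros a y Ha Hy. destruct (J_def a y Ha Hy) as [Hj Ej].
    destruct (J_def a c Ha Hc) as [Hjc Ejc]. split.
    + intros E. apply inj; auto. rewrite Ejc, <- E, Ej. ring.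
    + intros ->. apply inj; auto. rewrite Ej, Ejc. ring.
Qed.
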